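(* Let $D\colon \omega\to \omega^+$ be a function such that (i) $D$ is increasing (i.e., $m\le n$ implies $D(m)\le D(n)$), (ii) $D(0)=0$ or $D(0)=1$, and (iii) $D(2)>0$. Then there is a countably infinite total algebra $\mathbf{A}$ such that $d_{\mathbf{A}}(n)=D(n)$ for all $n\in\omega$.
   Context: $\omega=\{0,1,2,\dots\}$ and $\omega^+=\omega\cup\{\omega\}$, ordered naturally with $\omega$ largest. For an algebra $\mathbf{A}$ and $n\in\omega$, $d_{\mathbf{A}}(n)$ is the least size of a generating set of the direct power $\mathbf{A}^n$, with $d_{\mathbf{A}}(n)=\omega$ if $\mathbf{A}^n$ is not finitely generated ($\mathbf{A}^0$ is the one-element algebra). *)

(* Defs.v *)
From Stdlib Require List.
From mathcomp Require Import all_boot.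
Set Implicit Arguments. Unset Strict Implicit. Unset Printing Implicit Defensive.

Record algebra := Algebra {
  carrier : Type;
  sig : Type;
  arity : sig -> nat;
  op : forall i : sig, {ffun 'I_(arity i) -> carrier} -> carrier }.

Definition power (A : algebra) (n : nat) : algebra :=
  @Algebra {ffun 'I_n -> carrier A} (sig A) (@arity A)
    (fun i (x : {ffun 'I_(arity i) -> {ffun 'I_n -> carrier A}}) =>
       [ffun j : 'I_n => op [ffun k => x k j]]).

(* Subuniverses (possibly empty) of an algebra. *)
Definition subuniverse (A : algebra) (S : carrier A -> Prop) : Prop :=
  forall (i : sig A) (x : {ffun 'I_(arity i) -> carrier A}),
    (forall k, S (x k)) -> S (op x).

Definition generates (A : algebra) (X : seq (carrier A)) : Prop :=
  forall S, subuniverse S -> (forall x, List.In x X -> S x) -> forall y, S y.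

(* A^n has a generating set of size at most k (a list of length k). *)
Definition gen_by (A : algebra) (n k : nat) : Prop :=
  exists X : seq (carrier (power A n)), size X = k /\ generates X.

(* omega^+ = omega ∪ {omega}. *)
Inductive omegap := ofNat of nat | omega.

Definition ole (a b : omegap) : bool :=
  match a, b with
  | ofNat m, ofNat n => m <= n
  | _, omega => true
  | omega, ofNat _ => false
  end.

(* d_is A n v  <->  d_A(n) = v : least size of a generating set of A^n,
   omega if A^n is not finitely generated. *)
Definition d_is (A : algebra) (n : nat) (v : omegap) : Prop :=
  match v with
  | ofNat k => gen_by A n k /\ forall j, gen_by A n j -> k <= j
  | omega => forall j, ~ gen_by A n j
  end.

Definition countably_infinite (T : Type) : Prop :=
  exists f : nat -> T, bijective f.

(* Main.v *)
Require Import Defs.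
From mathcomp Require Import all_boot.
From Stdlib Require List.
From Stdlib Require Import Lia.
From mathcomp Require Import zify.
Set Implicit Arguments. Unset Strict Implicit.

Definition spec (m i l : nat) : nat := (pickle (m, i, l)).+1.

Lemma spec_inj m i l m' i' l' : spec m i l = spec m' i' l' -> (m, i, l) = (m', i', l').
Proof. by move=> [] /(pcan_inj pickleK). Qed.

Definition row (m k : nat) (i : 'I_m) : {ffun 'I_k -> nat} := [ffun l : 'I_k => spec m i l].

Record opidx (D : nat -> omegap) := OpIdx {
  om : nat; ok : nat; oeq : D om = ofNat ok; oy : {ffun 'I_om -> nat} }.

Definition opval (D : nat -> omegap) (i : opidx D) (q : {ffun 'I_(ok i) -> nat}) : nat :=
  match [pick j : 'I_(om i) | q == row (ok i) j] with
  | Some j => oy i j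
  | None => 0
  end.

Definition alg (D : nat -> omegap) : algebra :=
  @Algebra nat (opidx D) (@ok D) (@opval D).

Lemma In_mem (T : eqType) (x : T) (s : seq T) : x \in s -> List.In x s.
Proof.
elim: s => //= a s IH; rewrite in_cons => /orP [/eqP -> | H]; [by left | by right; apply: IH].
Qed.

Lemma mem_In (T : eqType) (x : T) (s : seq T) : List.In x s -> x \in s.
Proof.
elim: s => //= a s IH [-> | H]; rewrite in_cons; first by rewrite eqxx.
by rewrite IH ?orbT.
Qed.

Lemma ole_trans a b c : ole a b -> ole b c -> ole a c.
Proof.
case: a => [x|]; case: b => [y|]; case: c => [z|] //=; exact: leq_trans.
Qed.

Definition col n k (l : 'I_k) : {ffun 'I_n -> nat} := [ffun j : 'I_n => spec n j l].

Lemma n_le1 (D : nat -> omegap) n :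
  (forall m n, m <= n -> ole (D m) (D n)) -> ole (ofNat 1) (D 2) ->
  D n = ofNat 0 -> n <= 1.
Proof.
move=> mono H2 E; case: (leqP n 1) => // Hn.
have := ole_trans H2 (mono _ _ Hn); by rewrite E.
Qed.

Lemma pos (D : nat -> omegap) n k :
  (forall m n, m <= n -> ole (D m) (D n)) -> ole (ofNat 1) (D 2) ->
  D n = ofNat k -> gen_by (alg D) n k.
Proof.
move=> mono H2 E.
exists [seq @col n k l | l <- enum 'I_k]; split; first by rewrite size_map size_enum_ord.
move=> S HS HX y.
have := HS (OpIdx E y) [ffun l => @col n k l].
have -> : @op (power (alg D) n) (OpIdx E y) [ffun l => @col n k l] = y.
  apply/ffunP => j; rewrite ffunE /= /opval /=.
  case: pickP => [i /eqP Hi | H].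
  - suff -> : i = j by [].
    clear HX; case: k E Hi => [|k] E Hi.
      have := n_le1 mono H2 E => Hn1.
      apply: val_inj; move: (ltn_ord i) (ltn_ord j); rewrite /=; lia.
    have := congr1 (fun f : {ffun 'I_k.+1 -> nat} => f ord0) Hi.
    rewrite /col !ffunE /= => /spec_inj [/val_inj ->] //.
  - have := H j; rewrite /row.
    suff -> : [ffun k0 => [ffun l => @col n k l] k0 j] = [ffun l : 'I_k => spec n j l] by rewrite eqxx.
    by apply/ffunP => l; rewrite !ffunE.
apply=> l; apply: HX; apply: In_mem; rewrite ffunE; apply: map_f; by rewrite mem_enum.
Qed.

Lemma count_inj (T : eqType) a (g : 'I_a -> T) (X : seq T) :
  injective g -> (forall l, g l \in X) -> a <= size X.
Proof.
move=> gi gX.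
have := @uniq_leq_size _ [seq g l | l <- enum 'I_a] X.
rewrite size_map size_enum_ord; apply.
  by rewrite map_inj_uniq // enum_uniq.
by move=> x /mapP [l _ ->].
Qed.

Lemma neg (D : nat -> omegap) n j :
  (forall m n, m <= n -> ole (D m) (D n)) -> 0 < n ->
  ~~ ole (D n) (ofNat j) -> ~ gen_by (alg D) n j.
Proof.
move=> mono Hn Hle [X [Hs Hg]].
pose S (v : carrier (power (alg D) n)) :=
  List.In v X \/ ~~ injectiveb (fun jj : 'I_n => (v jj : nat)) \/ [exists jj, v jj == 0].
pose c := \sum_(x <- X) (x : {ffun 'I_n -> nat}) (Ordinal Hn).
pose y : carrier (power (alg D) n) := [ffun jj : 'I_n => c + 1 + jj].
have : S y.
  apply: Hg => [i w Hw|x Hx]; last by left.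
  case: i w Hw => m a E yy w Hw /=.
  set o := [ffun jj => _].
  case: (boolP [exists jj, o jj == 0]) => Hz; first by right; right.
  case: (boolP (injectiveb (fun jj : 'I_n => (o jj : nat)))) => Hinj; last by right; left.
  exfalso.
  have Hnz : forall jj, o jj != 0 by move=> jj; apply/negP => H0; case/negP: Hz; apply/existsP; exists jj.
  have [i00 _] : exists i00 : 'I_m, true.
    move: (Hnz (Ordinal Hn)); rewrite /o ffunE /opval /=.
    by case: pickP => [i0 _ _ | _]; [exists i0 | rewrite eqxx].
  pose ij jj := odflt i00 [pick i0 : 'I_m | [ffun k => w k jj] == row a i0].
  have Hij : forall jj, [ffun k => w k jj] = row a (ij jj) /\ o jj = yy (ij jj).
    move=> jj; move: (Hnz jj); rewrite /o /ij ffunE /opval /=.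
    by case: pickP => [i0 /eqP Hi0 _ | _]; [ | rewrite eqxx].
  have Hw2 : forall l jj, w l jj = spec m (ij jj) l.
    move=> l jj; have := congr1 (fun f : {ffun 'I_a -> nat} => f l) (Hij jj).1.
    by rewrite !ffunE.
  have ij_inj : injective ij.
    move=> x x' Hx; move/injectiveP: Hinj; apply.
    by rewrite (Hij x).2 (Hij x').2 Hx.
  have Hnm : n <= m by have := @leq_card _ _ ij ij_inj; rewrite !card_ord.
  have Hax : a <= size X.
    apply: (@count_inj _ a (fun l => w l)).
      move=> l l' /(congr1 (fun f : {ffun 'I_n -> nat} => f (Ordinal Hn))).
      by rewrite !Hw2 => /spec_inj [H]; apply: val_inj.
    move=> l; case: (Hw l) => [/mem_In // | [Hni | /existsP [jj]]].
      case/negP: Hni; apply/injectiveP => x x'; rewrite !Hw2.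
      by move/spec_inj => [/val_inj /ij_inj].
    by rewrite Hw2.
  have := mono _ _ Hnm; rewrite E => H.
  case/negP: Hle; apply: (ole_trans H) => /=; rewrite -Hs; exact: Hax.
case => [/mem_In Hy | [Hi | /existsP [jj]]].
- have : y (Ordinal Hn) <= c.
    rewrite /c; move: Hy; move: (y) => z; clear; elim: X => //= x X IH.
    rewrite in_cons big_cons => /orP [/eqP <- | /IH H]; first by apply: leq_addr.
    by apply: (leq_trans H); apply: leq_addl.
  by rewrite ffunE /=; lia.
- case/negP: Hi; apply/injectiveP => a b; rewrite /y !ffunE => H; apply: val_inj; exact: addnI H.
- by rewrite ffunE; lia.
Qed.

Lemma zero_not0 (D : nat -> omegap) :
  (forall m n, m <= n -> ole (D m) (D n)) -> D 0 = ofNat 1 -> ~ gen_by (alg D) 0 0.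
Proof.
move=> mono E [X [Hs Hg]].
have Hsub : subuniverse (A := power (alg D) 0) (fun _ => False).
  case=> m a Ea yy w /= Hw.
  have Ha : 0 < a by have := mono 0 m (leq0n m); rewrite E Ea /=.
  exact: (Hw (Ordinal Ha)).
apply: (Hg _ Hsub) ([ffun _ => 0] : carrier (power (alg D) 0)).
by case: X Hs Hg.
Qed.

Theorem theorem3p4 (D : nat -> omegap) :
  (forall m n, m <= n -> ole (D m) (D n)) ->
  (D 0 = ofNat 0 \/ D 0 = ofNat 1) ->
  ole (ofNat 1) (D 2) ->
  exists A : algebra, countably_infinite (carrier A) /\
    forall n : nat, d_is A n (D n).
Proof.
move=> mono H0 H2; exists (alg D); split.
  by exists id; exists id.
case=> [|n].
  case: H0 => E; rewrite E /=; (split; first exact: pos mono H2 E).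
    by [].
  case=> // /(zero_not0 mono E) [].
case E: (D n.+1) => [k|] /=.
  split; first exact: pos mono H2 E.
  move=> j Hg; rewrite leqNgt; apply/negP => Hj.
  apply: (neg mono (ltn0Sn n) _ Hg); by rewrite E /= -ltnNge.
move=> j; apply: (neg mono (ltn0Sn n)); by rewrite E.
Qed.
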